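(* Let $G=(V,E)$ be a simple graph with $|V|=n$, adjacency matrix $A$, and $D$ the diagonal matrix of vertex degrees. Then $$\alpha(G)=\max\{\mathbf{e}^\top x \mid x\in\{0,1\}^n,\ 0\leq (A+I)x-\mathbf{e}\leq (D-I)(\mathbf{e}-x)\},$$ where $I$ is the $n\times n$ identity and $\mathbf{e}$ the all-ones vector.
   Context: $\alpha(G)$ is the maximum cardinality of an independent set of $G$. Vector inequalities are componentwise. *)

(* Defs.v *)
From HB Require Import structures.
From mathcomp Require Import all_boot all_order all_algebra.
Set Implicit Arguments. Unset Strict Implicit. Unset Printing Implicit Defensive.
Import Order.TTheory GRing.Theory Num.Theory.
Local Open Scope ring_scope.

Definition simple_graph (n : nat) (g : rel 'I_n) : Prop :=
  symmetric g /\ irreflexive g.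

Definition independent (n : nat) (g : rel 'I_n) (S : {set 'I_n}) : bool :=
  [forall x in S, forall y in S, ~~ g x y].

Definition alpha (n : nat) (g : rel 'I_n) : nat :=
  (\max_(S : {set 'I_n} | independent g S) #|S|)%N.

Definition adjmx (n : nat) (g : rel 'I_n) : 'M[int]_n :=
  \matrix_(i, j) (g i j)%:R.

Definition degmx (n : nat) (g : rel 'I_n) : 'M[int]_n :=
  diag_mx (\row_i (#|[set j | g i j]|)%:R).

Definition onesv (n : nat) : 'cV[int]_n := const_mx 1.

Definition vec01 (n : nat) (x : {ffun 'I_n -> bool}) : 'cV[int]_n :=
  \col_i (x i)%:R.

Definition mxle (m k : nat) (A B : 'M[int]_(m, k)) : bool :=
  [forall i, forall j, A i j <= B i j].

Definition feasible (n : nat) (g : rel 'I_n) (x : {ffun 'I_n -> bool}) : bool :=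
  mxle 0 ((adjmx g + 1%:M) *m vec01 x - onesv n) &&
  mxle ((adjmx g + 1%:M) *m vec01 x - onesv n)
       ((degmx g - 1%:M) *m (onesv n - vec01 x)).

Definition eTx (n : nat) (x : {ffun 'I_n -> bool}) : int :=
  ((onesv n)^T *m vec01 x) 0 0.

(* Main.v *)
Require Import Defs.
From HB Require Import structures.
From mathcomp Require Import all_boot all_order all_algebra.
Import Order.TTheory GRing.Theory Num.Theory.
Local Open Scope ring_scope.

Lemma sumb (n : nat) (P : pred 'I_n) : \sum_j ((P j)%:R : int) = #|[set j | P j]|%:R.
Proof.
rewrite (bigID P) /= [X in _ + X]big1 ?addr0; last by move=> j /negbTE ->.
rewrite (eq_bigr (fun _ => 1)); last by move=> j ->.
by rewrite sumr_const cardsE.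
Qed.

Lemma entry1 n (g : rel 'I_n) x i :
  ((adjmx g + 1%:M) *m vec01 x - onesv n) i 0 = #|[set j | g i j && x j]|%:R + (x i)%:R - 1.
Proof.
rewrite mulmxDl mul1mx !mxE -sumb; congr (_ + _ - _).
apply: eq_bigr => j _; rewrite !mxE; by case: (g i j); case: (x j).

Qed.

Lemma entry2 n (g : rel 'I_n) x i :
  ((degmx g - 1%:M) *m (onesv n - vec01 x)) i 0 = (#|[set j | g i j]|%:R - 1) * (1 - (x i)%:R).
Proof.
rewrite mulmxBl mul1mx /degmx mul_diag_mx !mxE; by rewrite mulrBl mul1r.
Qed.

Lemma eTxE n (x : {ffun 'I_n -> bool}) : eTx x = #|[set j | x j]|%:R.
Proof.
rewrite /eTx !mxE -sumb; apply: eq_bigr => j _; by rewrite !mxE mul1r.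
Qed.
From mathcomp Require Import zify.

Lemma feas_indep n (g : rel 'I_n) x : feasible g x -> independent g [set j | x j].
Proof.
case/andP=> _ /forallP H2; apply/forallP=> i; apply/implyP; rewrite inE => xi.
apply/forallP=> j; apply/implyP; rewrite inE => xj; apply/negP => gij.
move/forallP: (H2 i) => /(_ 0); rewrite entry1 entry2 xi.
have : (0 < #|[set j | g i j && x j]|)%N by apply/card_gt0P; exists j; rewrite inE gij xj.
move: #|_| => c; move: #|_| => d => hc /=. rewrite subrr mulr0. lia.
Qed.

Lemma dom_feas n (g : rel 'I_n) (S : {set 'I_n}) : simple_graph g -> independent g S ->
  (forall i, i \notin S -> exists j, g i j && (j \in S)) ->
  feasible g [ffun i => i \in S].
Proof.
move=> [gs gi] hS hD.
have key : forall i, 0 <= ((adjmx g + 1%:M) *m vec01 [ffun i => i \in S] - onesv n) i 0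
   /\ ((adjmx g + 1%:M) *m vec01 [ffun i => i \in S] - onesv n) i 0 <=
     ((degmx g - 1%:M) *m (onesv n - vec01 [ffun i => i \in S])) i 0.
  move=> i; rewrite entry1 entry2 ffunE.
  have hle : (#|[set j | g i j && [ffun i => i \in S] j]| <= #|[set j | g i j]|)%N.
    by apply: subset_leq_card; apply/subsetP=> j; rewrite !inE => /andP[].
  case: (boolP (i \in S)) => iS.
    have -> : #|[set j | g i j && [ffun i => i \in S] j]| = 0%N.
      apply/eqP; rewrite cards_eq0; apply/eqP/setP=> j; rewrite !inE ffunE.
      apply/negbTE/negP=> /andP[gij jS].
      by move/forallP: hS => /(_ i); rewrite iS /= => /forallP /(_ j); rewrite jS gij.
    rewrite /= subrr mulr0; lia.
  have : (0 < #|[set j | g i j && [ffun i => i \in S] j]|)%N.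
    case: (hD i iS) => j /andP[gij jS]; apply/card_gt0P; exists j; by rewrite inE ffunE gij jS.
  move: hle; move: #|_| => c; move: #|_| => d => hle hc /=; rewrite subr0 mulr1; lia.
apply/andP; split; apply/forallP=> i; apply/forallP=> j; rewrite (ord1 j).
  by rewrite mxE; case: (key i).
by case: (key i).
Qed.

Theorem theorem4 (n : nat) (g : rel 'I_n) (hg : simple_graph g) :
  (exists x : {ffun 'I_n -> bool}, feasible g x /\ eTx x = (alpha g)%:Z) /\
  (forall x : {ffun 'I_n -> bool}, feasible g x -> eTx x <= (alpha g)%:Z).
Proof.
split; last first.
  move=> x /feas_indep hx; rewrite eTxE.
  have := leq_bigmax_cond (F := fun S : {set 'I_n} => #|S|) _ hx.
  rewrite /alpha; move: (\max_(_ | _) _)%N => a; move: #|_| => c h; lia.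
have : (0 < #|independent g|)%N.
  apply/card_gt0P; exists set0; rewrite unfold_in; apply/forallP=> x; by rewrite inE.
case/(eq_bigmax_cond (fun S : {set 'I_n} => #|S|)) => S SI hmax.
have hmax' : alpha g = #|S| by rewrite /alpha -hmax.
exists [ffun i => i \in S]; split; last first.
  rewrite eTxE hmax'; have -> : [set j | [ffun i => i \in S] j] = S by apply/setP=> i; rewrite inE ffunE.
  by rewrite natz.
apply: dom_feas => // i iS; apply/existsP; apply: contraT; rewrite negb_exists => /forallP hn.
have : independent g (i |: S).
  case: hg => gs gi.
  apply/forallP=> x; apply/implyP; rewrite in_setU1 => /orP[/eqP -> | xS];
  apply/forallP=> y; apply/implyP; rewrite in_setU1 => /orP[/eqP -> | yS].
  - by rewrite gi.
  - by have := hn y; rewrite yS andbT.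
  - by rewrite gs; have := hn x; rewrite xS andbT.
  - by move/forallP: SI => /(_ x); rewrite xS /= => /forallP /(_ y); rewrite yS.
move=> hI; have := leq_bigmax_cond (F := fun S : {set 'I_n} => #|S|) _ hI; rewrite -/(alpha g) hmax' cardsU1 (negbTE iS).
by rewrite ltnn.
Qed.
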